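(* Let $\mathcal M$ be a structural causal model with discrete variables $C$, binary $X$ (values $x,x'$), discrete $Z$ and binary $Y$ (values $y,y'$), given by structural equations $X=f_X(C,U_X)$, $Z=f_Z(X,C,U_Z)$, $Y=f_Y(Z,C,U_Y)$, where $C,U_X,U_Z,U_Y$ are mutually independent (so $X$ affects $Y$ only through the mediator $Z$, and $C$ is not a descendant of $X$). Fix $c$ with $P(c)>0$ and $\beta,\gamma,\theta,\delta\in\mathbb R$, and let $$f(c)=\beta P(y_x,y'_{x'}\mid c)+\gamma P(y_x,y_{x'}\mid c)+\theta P(y'_x,y'_{x'}\mid c)+\delta P(y_{x'},y'_x\mid c).$$ Define $\sigma=\beta-\gamma-\theta+\delta$, $W=(\gamma-\delta)P(y_x\mid c)+\delta P(y_{x'}\mid c)+\theta P(y'_{x'}\mid c)$, $$L=\max\{0,\ P(y_x\mid c)-P(y_{x'}\mid c),\ P(y\mid c)-P(y_{x'}\mid c),\ P(y_x\mid c)-P(y\mid c)\},$$ $$U=\min\Big\{P(y_x\mid c),\ P(y'_{x'}\mid c),\ P(y,x\mid c)+P(y',x'\mid c),\ P(y_x\mid c)-P(y_{x'}\mid c)+P(y,x'\mid c)+P(y',x\mid c),$$ $$\qquad \sum_z\sum_{z'\ne z}\min\{P(y\mid z,c),P(y'\mid z',c)\}\cdot\min\{P(z\mid x,c),P(z'\mid x',c)\}\Big\},$$ where $z,z'$ range over values of $Z$ (with the conditional probabilities defined). Then $$W+\sigma U\le f(c)\le W+\sigma L\ \text{ if }\sigma<0,\qquad W+\sigma L\le f(c)\le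 W+\sigma U\ \text{ if }\sigma>0.$$
   Context: For a value $x$ of $X$, $Y_x$ denotes the counterfactual variable ''the value $Y$ would take had $X$ been set to $x$''; $y_x$ is the event $Y_x=y$. Unsubscripted probabilities such as $P(y\mid z,c)$, $P(z\mid x,c)$, $P(y,x\mid c)$ are observational. Consistency: $X=x$ implies $Y_x=Y$. *)

(* Defs.v *)
From HB Require Import structures.
From mathcomp Require Import all_boot all_order all_algebra.
From mathcomp Require Import all_classical all_reals all_analysis.
Set Implicit Arguments. Unset Strict Implicit. Unset Printing Implicit Defensive.
Import Order.TTheory GRing.Theory Num.Theory.
Local Open Scope classical_set_scope.
Local Open Scope ring_scope.

(* Mutual independence of C, U_X, U_Z, U_Y is encoded by taking the
   joint law of (C, U) to be  pC (x) (PX (x) PZ (x) PY)  (product measure). *)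

Section SCM.
Variables (R : realType) (C Z : finType).
Variables (dX dZ dY : measure_display)
  (TX : measurableType dX) (TZ : measurableType dZ) (TY : measurableType dY).
Variables (pC : C -> R)
  (PX : probability TX R) (PZ : probability TZ R) (PY : probability TY R).
Variables (fX : C -> TX -> bool) (fZ : bool -> C -> TZ -> Z)
  (fY : Z -> C -> TY -> bool).

Definition noise := ((TX * TZ) * TY)%type.

Definition noise_law : set noise -> \bar R := ((PX \x PZ) \x PY)%E.

(* an event is a set of worlds (c, u); we present it as a family indexed by c *)
Definition event := C -> set noise.

Definition Pr (E : event) : R := \sum_(c : C) pC c * fine (noise_law (E c)).

Definition evI (A B : event) : event := fun c => A c `&` B c.

(* conditional probability (ratio; MathComp's convention x / 0 = 0) *)
Definition cPr (A B : event) : R := Pr (evI A B) / Pr B.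

Definition Xv (c : C) (u : noise) : bool := fX c u.1.1.
Definition Zv (c : C) (u : noise) : Z := fZ (Xv c u) c u.1.2.
Definition Yv (c : C) (u : noise) : bool := fY (Zv c u) c u.2.

(* counterfactual Y_x : value of Y had X been set to x *)
Definition Ycf (x : bool) (c : C) (u : noise) : bool := fY (fZ x c u.1.2) c u.2.

Definition evC (c0 : C) : event := fun c _ => c = c0.
Definition evX (x : bool) : event := fun c u => Xv c u = x.
Definition evZ (z : Z) : event := fun c u => Zv c u = z.
Definition evY (y : bool) : event := fun c u => Yv c u = y.
Definition evYcf (x y : bool) : event := fun c u => Ycf x c u = y.

End SCM.

Definition is_pmf (C : finType) (R : realType) (pC : C -> R) : Prop :=
  (forall c, 0 <= pC c) /\ \sum_(c : C) pC c = 1.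

Definition scm_measurable (C Z : finType)
  (dX dZ dY : measure_display)
  (TX : measurableType dX) (TZ : measurableType dZ) (TY : measurableType dY)
  (fX : C -> TX -> bool) (fZ : bool -> C -> TZ -> Z) (fY : Z -> C -> TY -> bool)
  : Prop :=
  (forall c x, measurable [set u | fX c u = x]) /\
  (forall x c z, measurable [set u | fZ x c u = z]) /\
  (forall z c y, measurable [set u | fY z c u = y]).

(* Main.v *)
Require Import Defs.
From HB Require Import structures.
From mathcomp Require Import all_boot all_order all_algebra.
From mathcomp Require Import all_classical all_reals all_analysis.
From mathcomp Require Import lra.
Import Order.TTheory GRing.Theory Num.Theory.
Local Open Scope classical_set_scope.
Local Open Scope ring_scope.

Section Part.
Variables (R : realType) (d : measure_display) (T : measurableType d)
  (P : probability T R) (F : finType) (f : T -> F).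
Hypothesis hf : forall v, measurable (f @^-1` [set v]).

Lemma part_mseq (s : seq F) : measurable [set u | f u \in s].
Proof.
elim: s => [|a s IH].
  by rewrite (_ : [set _ | _] = set0) //; apply/seteqP; split => u.
rewrite (_ : [set _ | _] = f @^-1` [set a] `|` [set u | f u \in s]).
  by apply: measurableU => //; exact: hf.
apply/seteqP; split => u /=; rewrite in_cons.
  by move=> /orP[/eqP|]; auto.
by case=> [->|->]; rewrite ?eqxx ?orbT.
Qed.

Lemma part_seq (s : seq F) : uniq s ->
  P [set u | f u \in s] = (\sum_(a <- s) P (f @^-1` [set a]))%E.
Proof.
elim: s => [_|a s IH /= /andP[an us]].
  rewrite big_nil (_ : [set _ | _] = set0) ?measure0 //; by apply/seteqP; split => u.
rewrite big_cons -IH // -measureU //; [|exact: part_mseq|].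
  congr (P _); apply/seteqP; split => u /=; rewrite in_cons.
    by move=> /orP[/eqP|]; auto.
  by case=> [->|->]; rewrite ?eqxx ?orbT.
apply/seteqP; split => u // [/= ua]; rewrite /= ua; by move/negbTE: an => ->.
Qed.

Lemma part_sum : \sum_(v : F) fine (P (f @^-1` [set v])) = 1.
Proof.
have := @part_seq _ (index_enum_uniq F).
rewrite (_ : [set _ | _] = setT); last first.
  by apply/seteqP; split => u //= _; rewrite mem_index_enum.
rewrite probability_setT => h.
rewrite sum_fine; first by rewrite -h.
move=> v _; apply: fin_num_measure; exact: hf.
Qed.
End Part.
Section Atoms.
Variables (R : realType) (C Z : finType).
Variables (dX dZ dY : measure_display)
  (TX : measurableType dX) (TZ : measurableType dZ) (TY : measurableType dY).
Variables (PX : probability TX R) (PZ : probability TZ R) (PY : probability TY R).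
Variables (fX : C -> TX -> bool) (fZ : bool -> C -> TZ -> Z)
  (fY : Z -> C -> TY -> bool).
Hypothesis hmeas : scm_measurable fX fZ fY.
Variables (c : C) (x : bool).

Definition atomT := ((bool * (Z * Z)) * {ffun Z -> bool})%type.
Definition atom (u : noise TX TZ TY) : atomT :=
  ((fX c u.1.1, (fZ x c u.1.2, fZ (~~x) c u.1.2)), [ffun z => fY z c u.2]).
Definition AX b := [set t | fX c t = b].
Definition AZ (p : Z * Z) := [set t | (fZ x c t, fZ (~~x) c t) = p].
Definition AY (g : {ffun Z -> bool}) := [set t | [ffun z => fY z c t] = g].
Definition w (a : atomT) : R :=
  fine (PX (AX a.1.1)) * fine (PZ (AZ a.1.2)) * fine (PY (AY a.2)).
Let mu := noise_law PX PZ PY.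

Lemma mAX b : measurable (AX b).
Proof. by case: hmeas => h _; apply: h. Qed.
Lemma mAZ p : measurable (AZ p).
Proof.
case: hmeas => _ [h _]; case: p => z1 z2.
rewrite (_ : AZ _ = [set t | fZ x c t = z1] `&` [set t | fZ (~~x) c t = z2]).
  by apply: measurableI; apply: h.
by apply/seteqP; split => t /=; [case|move=> [<- <-]].
Qed.
Lemma mAY g : measurable (AY g).
Proof.
case: hmeas => _ [_ h].
rewrite (_ : AY _ = \big[setI/setT]_(z <- index_enum Z) [set t | fY z c t = g z]).
  by apply: bigsetI_measurable => z _; apply: h.
apply/seteqP; split => t /=.
  move=> <-; rewrite -bigcap_seq => z _ /=; by rewrite ffunE.
rewrite -bigcap_seq => H; apply/ffunP => z; rewrite ffunE; apply: H.
exact: mem_index_enum.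
Qed.

Lemma atom_pre a : atom @^-1` [set a] = (AX a.1.1 `*` AZ a.1.2) `*` AY a.2.
Proof.
apply/seteqP; split => [u /= <- //|[[u1 u2] u3] /= [[h1 h2] h3]].
by rewrite /atom /= h1 h2 h3 -!surjective_pairing.
Qed.

Lemma mu_atom a : mu (atom @^-1` [set a]) = (w a)%:E.
Proof.
rewrite atom_pre /mu /noise_law. rewrite (@product_measure1E _ _ _ _ _ (PX \x PZ)%E PY); last 2 first.
- by apply: measurableX; [apply: mAX|apply: mAZ].
- exact: mAY.
rewrite [X in (X * _)%E](_ : _ = PX (AX a.1.1) * PZ (AZ a.1.2))%E; last by apply: product_measure1E; [exact: mAX|exact: mAZ].
rewrite /w !EFinM !fineK //; apply: fin_num_measure;
  [exact: mAY|exact: mAZ|exact: mAX].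
Qed.
Lemma mpre a : measurable (atom @^-1` [set a]).
Proof. rewrite atom_pre; apply: measurableX; [apply: measurableX; [exact: mAX|exact: mAZ]|exact: mAY]. Qed.

Lemma mseq (s : seq atomT) : measurable [set u | atom u \in s].
Proof.
elim: s => [|a s IH].
  by rewrite (_ : [set _ | _] = set0) //; apply/seteqP; split => u.
rewrite (_ : [set _ | _] = atom @^-1` [set a] `|` [set u | atom u \in s]).
  by apply: measurableU => //; exact: mpre.
apply/seteqP; split => u /=; rewrite in_cons.
  by move=> /orP[/eqP|]; auto.
by case=> [->|->]; rewrite ?eqxx ?orbT.
Qed.

Lemma mu_seq (s : seq atomT) : uniq s ->
  mu [set u | atom u \in s] = (\sum_(a <- s) (w a)%:E)%E.
Proof.
elim: s => [_|a s IH /= /andP[an us]].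
  rewrite big_nil (_ : [set _ | _] = set0) ?measure0 //; by apply/seteqP; split => u.
rewrite big_cons -IH // -mu_atom -measureU //; [|exact: mpre|exact: mseq|].
  congr (mu _); apply/seteqP; split => u /=; rewrite in_cons.
    by move=> /orP[/eqP|]; auto.
  by case=> [->|->]; rewrite ?eqxx ?orbT.
apply/seteqP; split => u // [/= ua]; rewrite /= ua; by move/negbTE: an => ->.
Qed.

Lemma mu_pred (phi : pred atomT) :
  fine (mu [set u | phi (atom u)]) = \sum_(a | phi a) w a.
Proof.
rewrite (_ : [set _ | _] = [set u | atom u \in seq.filter phi (index_enum atomT)]).
  rewrite mu_seq; last by rewrite filter_uniq // index_enum_uniq.
  by rewrite big_filter sumEFin.
by apply/seteqP; split => u /=; rewrite mem_filter mem_index_enum andbT.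
Qed.
Definition qX b := fine (PX (AX b)).
Definition qZ p := fine (PZ (AZ p)).
Definition qY g := fine (PY (AY g)).
Definition m (phi : pred atomT) := \sum_(a | phi a) w a.

Lemma qX_ge0 b : 0 <= qX b. Proof. by apply: fine_ge0; apply: measure_ge0. Qed.
Lemma qZ_ge0 p : 0 <= qZ p. Proof. by apply: fine_ge0; apply: measure_ge0. Qed.
Lemma qY_ge0 g : 0 <= qY g. Proof. by apply: fine_ge0; apply: measure_ge0. Qed.
Lemma w_ge0 a : 0 <= w a.
Proof. by rewrite /w; rewrite !mulr_ge0 //; [exact: qX_ge0|exact: qZ_ge0|exact: qY_ge0]. Qed.
Lemma m_ge0 phi : 0 <= m phi.
Proof. by apply: sumr_ge0 => a _; exact: w_ge0. Qed.

Lemma sX : \sum_b qX b = 1.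
Proof. apply: (@part_sum _ _ _ PX _ (fX c)) => v; exact: mAX. Qed.
Lemma sZ : \sum_p qZ p = 1.
Proof. apply: (@part_sum _ _ _ PZ _ (fun t => (fZ x c t, fZ (~~x) c t))) => v; exact: mAZ. Qed.
Lemma sY : \sum_g qY g = 1.
Proof. apply: (@part_sum _ _ _ PY _ (fun t => [ffun z => fY z c t])) => v; exact: mAY. Qed.

Lemma m_pair phi : m phi = \sum_(a1 : bool * (Z * Z))
   \sum_(g : {ffun Z -> bool} | phi (a1, g)) qX a1.1 * qZ a1.2 * qY g.
Proof. by rewrite /m pair_big_dep; apply: eq_big => [[a1 g]|[a1 g] _]. Qed.

Lemma m_fact12 phi (p12 : pred (bool * (Z * Z))) (p3 : pred {ffun Z -> bool}) :
  (forall a, phi a = p12 a.1 && p3 a.2) ->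
  m phi = (\sum_(a1 | p12 a1) qX a1.1 * qZ a1.2) * \sum_(g | p3 g) qY g.
Proof.
move=> H; rewrite m_pair mulr_suml.
rewrite [LHS](bigID p12) /= [X in _ + X]big1 ?addr0; last first.
  by move=> a1 /negbTE h; apply: big1 => g; rewrite H /= h.
apply: eq_bigr => a1 h; rewrite mulr_sumr; apply: eq_bigl => g.
by rewrite H /= h.
Qed.

Lemma m_fact phi (p1 : pred bool) (p2 : pred (Z * Z)) (p3 : pred {ffun Z -> bool}) :
  (forall a, phi a = [&& p1 a.1.1, p2 a.1.2 & p3 a.2]) ->
  m phi = (\sum_(b | p1 b) qX b) * (\sum_(p | p2 p) qZ p) * \sum_(g | p3 g) qY g.
Proof.
move=> H; rewrite (@m_fact12 _ (fun a1 => p1 a1.1 && p2 a1.2) p3).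
  congr (_ * _); rewrite mulr_suml; under [RHS]eq_bigr => b _ do rewrite mulr_sumr.
  by rewrite pair_big_dep.
by move=> a; rewrite H andbA.
Qed.

Lemma m_fact23 phi (psi : Z * Z -> pred {ffun Z -> bool}) :
  (forall a, phi a = psi a.1.2 a.2) ->
  m phi = \sum_p qZ p * \sum_(g | psi p g) qY g.
Proof.
move=> H; rewrite m_pair.
transitivity (\sum_(a1 : bool * (Z*Z)) qX a1.1 * (qZ a1.2 * \sum_(g | psi a1.2 g) qY g)).
  apply: eq_bigr => a1 _; rewrite !mulr_sumr; apply: eq_big => [g|g _].
    by rewrite H.
  by rewrite mulrA.
transitivity (\sum_b \sum_p qX b * (qZ p * \sum_(g | psi p g) qY g)).
  by rewrite pair_big.
rewrite -[RHS]mul1r -sX mulr_suml; apply: eq_bigr => b _; by rewrite mulr_sumr.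
Qed.
Definition pand (p q : pred atomT) : pred atomT := fun a => p a && q a.
Definition Za (a : atomT) := if a.1.1 == x then a.1.2.1 else a.1.2.2.
Definition pYx1 y : pred atomT := fun a => a.2 a.1.2.1 == y.
Definition pYx2 y : pred atomT := fun a => a.2 a.1.2.2 == y.
Definition pXa b : pred atomT := fun a => a.1.1 == b.
Definition pZa z : pred atomT := fun a => Za a == z.
Definition pYa y : pred atomT := fun a => a.2 (Za a) == y.
Definition qZx (z : Z) := \sum_(p : Z * Z | p.1 == z) qZ p.
Definition qZx' (z : Z) := \sum_(p : Z * Z | p.2 == z) qZ p.
Definition rY (z : Z) y := \sum_(g : {ffun Z -> bool} | g z == y) qY g.
Definition sP y (p : Z * Z) := \sum_(g : {ffun Z -> bool} | (g p.1 == y) && (g p.2 == ~~ y)) qY g.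

Lemma mT : m predT = 1.
Proof.
rewrite (@m_fact _ predT predT predT) // sX sZ sY; by rewrite !mul1r.
Qed.

Lemma mX b : m (pXa b) = qX b.
Proof.
rewrite (@m_fact _ (pred1 b) predT predT); last by move=> a; rewrite /pXa !andbT.
by rewrite sZ sY !mulr1 big_pred1_eq.
Qed.

Lemma mZX z : m (pand (pZa z) (pXa x)) = qX x * qZx z.
Proof.
rewrite (@m_fact _ (pred1 x) (fun p => p.1 == z) predT); last first.
  move=> [[b [z1 z2]] g]; rewrite /= /pand /pZa /pXa /Za /=.
  by case: (b == x); rewrite /= ?andbT ?andbF.
by rewrite sY mulr1 big_pred1_eq.
Qed.

Lemma mZX' z : m (pand (pZa z) (pXa (~~ x))) = qX (~~ x) * qZx' z.
Proof.
rewrite (@m_fact _ (pred1 (~~ x)) (fun p => p.2 == z) predT); last first.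
  move=> [[b [z1 z2]] g]; rewrite /= /pand /pZa /pXa /Za /=.
  by case: b; case: x; rewrite /= ?andbT ?andbF.
by rewrite sY mulr1 big_pred1_eq.
Qed.

Lemma mYZ y z : m (pand (pYa y) (pZa z)) = m (pZa z) * rY z y.
Proof.
pose p12 := fun a1 : bool * (Z * Z) => (if a1.1 == x then a1.2.1 else a1.2.2) == z.
rewrite (@m_fact12 _ p12 (fun g : {ffun Z -> bool} => g z == y)); last first.
  move=> [[b [z1 z2]] g]; rewrite /= /pand /pZa /pYa /Za /p12 /=.
  have [->|/negbTE ne] := eqVneq (if b == x then z1 else z2) z.
    by rewrite andbT.
  by rewrite andbF.
rewrite (@m_fact12 (pZa z) p12 predT) // ?sY ?mulr1 //.
by move=> a; rewrite andbT.
Qed.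

Lemma mp1 y : m (pand (pYx1 y) (pYx2 (~~ y))) = \sum_p qZ p * sP y p.
Proof. by apply: (@m_fact23 _ (fun (p : Z * Z) (g : {ffun Z -> bool}) => (g p.1 == y) && (g p.2 == ~~ y))). Qed.

Lemma m_ineq (ps qs : seq (pred atomT)) :
  (forall a, \sum_(f <- ps) ((f a : bool)%:R : R) <= \sum_(f <- qs) (f a)%:R) ->
  \sum_(f <- ps) m f <= \sum_(f <- qs) m f.
Proof.
have E l : \sum_(f <- l) m f = \sum_a (\sum_(f <- l) ((f a : bool)%:R : R)) * w a.
  rewrite /m; under eq_bigr do rewrite big_mkcond; rewrite exchange_big /=.
  apply: eq_bigr => a _; rewrite mulr_suml; apply: eq_bigr => f _.
  by case: (f a); rewrite /= ?mul1r ?mul0r.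
move=> H; rewrite !E; apply: ler_sum => a _; apply: ler_wpM2r; [exact: w_ge0|exact: H].
Qed.

Variable pC : C -> R.

Lemma Pr_at (E : event C TX TZ TY) (phi : pred atomT) :
  (forall c' u, E c' u -> c' = c) -> (forall u, E c u <-> phi (atom u)) ->
  Pr pC PX PZ PY E = pC c * m phi.
Proof.
move=> H1 H2; rewrite /Pr (bigD1 c) //= big1 ?addr0.
  congr (_ * _); rewrite /m -mu_pred /mu; congr (fine (noise_law _ _ _ _)).
  by apply: funext => u; apply: propext; exact: H2.
move=> c' hc'; rewrite (_ : E c' = set0); last first.
  apply: funext => u; apply: propext; split => // /H1 hc; by rewrite hc eqxx in hc'.
by rewrite (_ : noise_law PX PZ PY set0 = 0%E) ?mulr0.
Qed.

Lemma iIC (A : event C TX TZ TY) (phi : pred atomT) : (forall u, A c u <-> phi (atom u)) ->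
  forall u, evI A (evC c) c u <-> phi (atom u).
Proof. move=> H u; split => [[/H] //|/H h]; by split. Qed.

Lemma vIC (A : event C TX TZ TY) : forall c' u, evI A (evC c) c' u -> c' = c.
Proof. by move=> c' u []. Qed.

Lemma iI (A B : event C TX TZ TY) (phi psi : pred atomT) : (forall u, A c u <-> phi (atom u)) ->
  (forall u, B c u <-> psi (atom u)) ->
  forall u, evI A B c u <-> pand phi psi (atom u).
Proof.
move=> HA HB u; rewrite /pand; split => [[/HA -> /HB ->] //|/andP[/HA h1 /HB h2]].
by split.
Qed.

Lemma cP_C (A : event C TX TZ TY) (phi : pred atomT) : pC c != 0 ->
  (forall u, A c u <-> phi (atom u)) -> cPr pC PX PZ PY A (evC c) = m phi.
Proof.
move=> hc H; rewrite /cPr (@Pr_at _ phi) ?(@Pr_at _ predT) //.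
- by rewrite mT mulr1 mulrAC divff // mul1r.
- exact: vIC.
- exact: iIC.
Qed.

Lemma cP_gen (A B : event C TX TZ TY) (phi psi : pred atomT) : pC c != 0 ->
  (forall u, A c u <-> phi (atom u)) -> (forall c' u, B c' u -> c' = c) ->
  (forall u, B c u <-> psi (atom u)) ->
  cPr pC PX PZ PY A B = m (pand phi psi) / m psi.
Proof.
move=> hc HA HB1 HB2; rewrite /cPr (@Pr_at _ (pand phi psi)) ?(@Pr_at _ psi) //.
- by rewrite -mulf_div divff // mul1r.
- by move=> c' u [_ /HB1].
- exact: iI.
Qed.

Lemma iYx1 y u : evYcf fZ fY x y c u <-> pYx1 y (atom u).
Proof. rewrite /evYcf /Ycf /pYx1 /= ffunE; exact: (rwP eqP). Qed.
Lemma iYx2 y u : evYcf fZ fY (~~ x) y c u <-> pYx2 y (atom u).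
Proof. rewrite /evYcf /Ycf /pYx2 /= ffunE; exact: (rwP eqP). Qed.
Lemma iX b u : evX fX b c u <-> pXa b (atom u).
Proof. rewrite /evX /Xv /pXa /=; exact: (rwP eqP). Qed.
Lemma iZ z u : evZ fX fZ z c u <-> pZa z (atom u).
Proof.
rewrite /evZ /Zv /Xv /pZa /Za /=.
by case: (fX c u.1.1); case: x => /=; exact: (rwP eqP).
Qed.
Lemma iY y u : evY fX fZ fY y c u <-> pYa y (atom u).
Proof.
rewrite /evY /Yv /Zv /Xv /pYa /Za /= ffunE.
by case: (fX c u.1.1); case: x => /=; exact: (rwP eqP).
Qed.
Definition P1 y := pand (pYx1 y) (pYx2 (~~ y)).
Lemma m_eq (ps qs : seq (pred atomT)) :
  (forall a, \sum_(f <- ps) ((f a : bool)%:R : R) = \sum_(f <- qs) (f a)%:R) ->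
  \sum_(f <- ps) m f = \sum_(f <- qs) m f.
Proof.
move=> H; apply/eqP; rewrite eq_le; apply/andP; split; apply: m_ineq => a;
  by rewrite H.
Qed.

Ltac pw := let b := fresh "b" in let z1 := fresh "z1" in let z2 := fresh "z2" in
  let g := fresh "g" in
  move=> [[b [z1 z2]] g]; rewrite !big_cons !big_nil /= /P1 /pand /pYx1 /pYx2 /pYa /pXa /Za /=;
  case: b; case: x; case: (g z1); case: (g z2); rewrite /=; lra.


Lemma L2 y : m (pYx1 y) <= m (P1 y) + m (pYx2 y).
Proof.
have := @m_ineq [:: pYx1 y] [:: P1 y; pYx2 y]; rewrite !big_cons !big_nil !addr0.
by apply; case: y; pw.
Qed.

Lemma L3 y : m (pYa y) <= m (P1 y) + m (pYx2 y).
Proof.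
have := @m_ineq [:: pYa y] [:: P1 y; pYx2 y]; rewrite !big_cons !big_nil !addr0.
by apply; case: y; pw.
Qed.

Lemma L4 y : m (pYx1 y) <= m (P1 y) + m (pYa y).
Proof.
have := @m_ineq [:: pYx1 y] [:: P1 y; pYa y]; rewrite !big_cons !big_nil !addr0.
by apply; case: y; pw.
Qed.

Lemma U1 y : m (P1 y) <= m (pYx1 y).
Proof.
have := @m_ineq [:: P1 y] [:: pYx1 y]; rewrite !big_cons !big_nil !addr0.
by apply; case: y; pw.
Qed.

Lemma U2 y : m (P1 y) <= m (pYx2 (~~ y)).
Proof.
have := @m_ineq [:: P1 y] [:: pYx2 (~~ y)]; rewrite !big_cons !big_nil !addr0.
by apply; case: y; pw.
Qed.

Lemma U3 y : m (P1 y) <= m (pand (pYa y) (pXa x)) + m (pand (pYa (~~ y)) (pXa (~~ x))).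
Proof.
have := @m_ineq [:: P1 y] [:: pand (pYa y) (pXa x); pand (pYa (~~ y)) (pXa (~~ x))].
rewrite !big_cons !big_nil !addr0.
by apply; case: y; pw.
Qed.

Lemma U4 y : m (P1 y) + m (pYx2 y) <=
  m (pYx1 y) + m (pand (pYa y) (pXa (~~ x))) + m (pand (pYa (~~ y)) (pXa x)).
Proof.
have := @m_ineq [:: P1 y; pYx2 y]
  [:: pYx1 y; pand (pYa y) (pXa (~~ x)); pand (pYa (~~ y)) (pXa x)].
rewrite !big_cons !big_nil !addr0 addrA.
by apply; case: y; pw.
Qed.

Lemma E1 y : m (pYx1 y) = m (P1 y) + m (pand (pYx1 y) (pYx2 y)).
Proof.
have := @m_eq [:: pYx1 y] [:: P1 y; pand (pYx1 y) (pYx2 y)].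
rewrite !big_cons !big_nil !addr0.
by apply; case: y; pw.
Qed.

Lemma E2 y : m (pYx2 y) = m (pand (pYx2 y) (pYx1 (~~ y))) + m (pand (pYx1 y) (pYx2 y)).
Proof.
have := @m_eq [:: pYx2 y] [:: pand (pYx2 y) (pYx1 (~~ y)); pand (pYx1 y) (pYx2 y)].
rewrite !big_cons !big_nil !addr0.
by apply; case: y; pw.
Qed.

Lemma E3 y : m (pYx2 (~~ y)) = m (P1 y) + m (pand (pYx1 (~~ y)) (pYx2 (~~ y))).
Proof.
have := @m_eq [:: pYx2 (~~ y)] [:: P1 y; pand (pYx1 (~~ y)) (pYx2 (~~ y))].
rewrite !big_cons !big_nil !addr0.
by apply; case: y; pw.
Qed.

Lemma mZ_ge z : qX x * qZx z <= m (pZa z).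
Proof.
rewrite -mZX; have := @m_ineq [:: pand (pZa z) (pXa x)] [:: pZa z].
rewrite !big_cons !big_nil !addr0; apply => a.
rewrite !big_cons !big_nil /pand /=; case: (pZa z a); case: (pXa x a); rewrite /=; lra.
Qed.

Lemma mZ_ge' z : qX (~~ x) * qZx' z <= m (pZa z).
Proof.
rewrite -mZX'; have := @m_ineq [:: pand (pZa z) (pXa (~~ x))] [:: pZa z].
rewrite !big_cons !big_nil !addr0; apply => a.
rewrite !big_cons !big_nil /pand /=; case: (pZa z a); case: (pXa (~~ x) a); rewrite /=; lra.
Qed.

Lemma sub_sum (F : finType) (f : F -> R) (P Q : pred F) :
  (forall i, 0 <= f i) -> (forall i, P i -> Q i) ->
  \sum_(i | P i) f i <= \sum_(i | Q i) f i.
Proof.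
move=> f0 PQ; rewrite [X in X <= _]big_mkcond [X in _ <= X]big_mkcond /=.
apply: ler_sum => i _; case Pi: (P i); first by rewrite (PQ _ Pi).
by case: (Q i).
Qed.

Lemma qZ_le p : qZ p <= qZx p.1 /\ qZ p <= qZx' p.2.
Proof.
have e : qZ p = \sum_(q | q == p) qZ q by rewrite big_pred1_eq.
rewrite e; split; apply: sub_sum => [q|q /eqP ->] //; exact: qZ_ge0.
Qed.

Lemma sP_le y p : sP y p <= rY p.1 y /\ sP y p <= rY p.2 (~~ y).
Proof.
split; apply: sub_sum.
- exact: qY_ge0.
- by move=> g /andP[].
- exact: qY_ge0.
- by move=> g /andP[_ ->].
Qed.

Lemma sP_diag y p : p.2 == p.1 -> sP y p = 0.
Proof.
move/eqP=> e; rewrite /sP big_pred0 // => g; rewrite e; by case: (g p.1); case: y.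
Qed.

Lemma bnd5 y : 0 < qX x -> 0 < qX (~~ x) ->
  m (P1 y) <= \sum_z \sum_(z' | z' != z)
    Num.min (m (pand (pYa y) (pZa z)) / m (pZa z))
            (m (pand (pYa (~~ y)) (pZa z')) / m (pZa z'))
    * Num.min (m (pand (pZa z) (pXa x)) / m (pXa x))
              (m (pand (pZa z') (pXa (~~ x))) / m (pXa (~~ x))).
Proof.
move=> hx hx'; rewrite /P1 mp1 pair_big_dep /=.
rewrite (bigID (fun p : Z * Z => p.2 != p.1)) /= [X in _ + X]big1 ?addr0; last first.
  by move=> p; rewrite negbK => /(sP_diag y) ->; rewrite mulr0.
apply: ler_sum => p hp.
rewrite !mX mZX mZX' (mulrAC (qX x)) divff ?mul1r ?lt0r_neq0 //.
rewrite (mulrAC (qX (~~ x))) divff ?mul1r ?lt0r_neq0 //.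
have [qa qb] := qZ_le p; have [sa sb] := sP_le y p.
have Bge0 : 0 <= Num.min (m (pand (pYa y) (pZa p.1)) / m (pZa p.1))
            (m (pand (pYa (~~ y)) (pZa p.2)) / m (pZa p.2)).
  by rewrite le_min !divr_ge0 ?m_ge0.
have Age0 : 0 <= Num.min (qZx p.1) (qZx' p.2).
  by rewrite le_min !sumr_ge0 // => q _; exact: qZ_ge0.
have [h1|h1] := eqVneq (m (pZa p.1)) 0.
  have h : qZx p.1 <= 0 by rewrite -(pmulr_rle0 _ hx) -h1 mZ_ge.
  have -> : qZ p = 0 by apply/le_anti; rewrite qZ_ge0 andbT; exact: le_trans qa h.
  by rewrite mul0r mulr_ge0.
have [h2|h2] := eqVneq (m (pZa p.2)) 0.
  have h : qZx' p.2 <= 0 by rewrite -(pmulr_rle0 _ hx') -h2 mZ_ge'.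
  have -> : qZ p = 0 by apply/le_anti; rewrite qZ_ge0 andbT; exact: le_trans qb h.
  by rewrite mul0r mulr_ge0.
rewrite !mYZ (mulrC (m (pZa p.1))) (mulrC (m (pZa p.2))) !mulfK //.
rewrite mulrC; apply: ler_pM; rewrite ?qZ_ge0 ?le_min ?qa ?qb ?sa ?sb //.
by apply: sumr_ge0 => g _; exact: qY_ge0.
Qed.
End Atoms.

Theorem theorem3 (R : realType) (C Z : finType)
  (dX dZ dY : measure_display)
  (TX : measurableType dX) (TZ : measurableType dZ) (TY : measurableType dY)
  (pC : C -> R) (PX : probability TX R) (PZ : probability TZ R)
  (PY : probability TY R)
  (fX : C -> TX -> bool) (fZ : bool -> C -> TZ -> Z) (fY : Z -> C -> TY -> bool)
  (hpC : is_pmf pC) (hmeas : scm_measurable fX fZ fY)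
  (c : C) (x y : bool) (beta gamma theta delta : R) :
  let x' := ~~ x in
  let y' := ~~ y in
  let P := Pr pC PX PZ PY in
  let cP := cPr pC PX PZ PY in
  let X_ := evX fX in
  let Z_ := evZ fX fZ in
  let Y_ := evY fX fZ fY in
  let Ycf_ := evYcf (Z := Z) fZ fY in
  0 < P (evC c) ->
  0 < P (evI (X_ x) (evC c)) ->
  0 < P (evI (X_ x') (evC c)) ->
  let f := beta * cP (evI (Ycf_ x y) (Ycf_ x' y')) (evC c)
         + gamma * cP (evI (Ycf_ x y) (Ycf_ x' y)) (evC c)
         + theta * cP (evI (Ycf_ x y') (Ycf_ x' y')) (evC c)
         + delta * cP (evI (Ycf_ x' y) (Ycf_ x y')) (evC c) in
  let sigma := beta - gamma - theta + delta in
  let Pyx := cP (Ycf_ x y) (evC c) in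
  let Pyx' := cP (Ycf_ x' y) (evC c) in
  let Py'x' := cP (Ycf_ x' y') (evC c) in
  let Py := cP (Y_ y) (evC c) in
  let W := (gamma - delta) * Pyx + delta * Pyx' + theta * Py'x' in
  let L := Num.max 0 (Num.max (Pyx - Pyx') (Num.max (Py - Pyx') (Pyx - Py))) in
  let U := Num.min Pyx (Num.min Py'x'
             (Num.min (cP (evI (Y_ y) (X_ x)) (evC c) + cP (evI (Y_ y') (X_ x')) (evC c))
             (Num.min (Pyx - Pyx' + cP (evI (Y_ y) (X_ x')) (evC c)
                                  + cP (evI (Y_ y') (X_ x)) (evC c))
               (\sum_(z : Z) \sum_(z' : Z | z' != z)
                  Num.min (cP (Y_ y) (evI (Z_ z) (evC c)))
                          (cP (Y_ y') (evI (Z_ z') (evC c)))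
                  * Num.min (cP (Z_ z) (evI (X_ x) (evC c)))
                            (cP (Z_ z') (evI (X_ x') (evC c))))))) in
  (sigma < 0 -> W + sigma * U <= f <= W + sigma * L) /\
  (0 < sigma -> W + sigma * L <= f <= W + sigma * U).

Proof.
move=> x' y' P cP X_ Z_ Y_ Ycf_ hC hX hX' f sigma Pyx Pyx' Py'x' Py W L U.
have PrA := @Pr_at R C Z dX dZ dY TX TZ TY PX PZ PY fX fZ fY hmeas c x pC.
have cC := @cP_C R C Z dX dZ dY TX TZ TY PX PZ PY fX fZ fY hmeas c x pC.
have cG := @cP_gen R C Z dX dZ dY TX TZ TY PX PZ PY fX fZ fY hmeas c x pC.
have hPC : P (evC c) = pC c.
  rewrite /P (PrA _ predT) //.
  by rewrite (@mT R C Z dX dZ dY TX TZ TY PX PZ PY fX fZ fY hmeas c x) mulr1.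
have pc0 : 0 < pC c by rewrite -hPC.
have hc : pC c != 0 by rewrite lt0r_neq0.
have ePX : forall b, P (evI (X_ b) (evC c)) = pC c * qX R C dX TX PX fX c b.
  move=> b; rewrite /P (PrA _ (pXa Z b)).
  - by rewrite (@mX R C Z dX dZ dY TX TZ TY PX PZ PY fX fZ fY hmeas c x).
  - by move=> c' u [].
  - by apply: iIC => u; exact: iX.
have qx : 0 < qX R C dX TX PX fX c x by rewrite -(pmulr_rgt0 _ pc0) -ePX.
have qx' : 0 < qX R C dX TX PX fX c (~~ x) by rewrite -(pmulr_rgt0 _ pc0) -ePX.
have e_p1 : cP (evI (Ycf_ x y) (Ycf_ x' y')) (evC c) = m R C Z dX dZ dY TX TZ TY PX PZ PY fX fZ fY c x (P1 Z y).
  by apply: cC => //; apply: iI => u; [exact: iYx1|exact: iYx2].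
have e_p2 : cP (evI (Ycf_ x y) (Ycf_ x' y)) (evC c) = m R C Z dX dZ dY TX TZ TY PX PZ PY fX fZ fY c x (pand Z (pYx1 Z y) (pYx2 Z y)).
  by apply: cC => //; apply: iI => u; [exact: iYx1|exact: iYx2].
have e_p3 : cP (evI (Ycf_ x y') (Ycf_ x' y')) (evC c)
    = m R C Z dX dZ dY TX TZ TY PX PZ PY fX fZ fY c x (pand Z (pYx1 Z (~~ y)) (pYx2 Z (~~ y))).
  by apply: cC => //; apply: iI => u; [exact: iYx1|exact: iYx2].
have e_p4 : cP (evI (Ycf_ x' y) (Ycf_ x y')) (evC c)
    = m R C Z dX dZ dY TX TZ TY PX PZ PY fX fZ fY c x (pand Z (pYx2 Z y) (pYx1 Z (~~ y))).
  by apply: cC => //; apply: iI => u; [exact: iYx2|exact: iYx1].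
have e_Pyx : Pyx = m R C Z dX dZ dY TX TZ TY PX PZ PY fX fZ fY c x (pYx1 Z y).
  by apply: cC => // u; exact: iYx1.
have e_Pyx' : Pyx' = m R C Z dX dZ dY TX TZ TY PX PZ PY fX fZ fY c x (pYx2 Z y).
  by apply: cC => // u; exact: iYx2.
have e_Py'x' : Py'x' = m R C Z dX dZ dY TX TZ TY PX PZ PY fX fZ fY c x (pYx2 Z (~~ y)).
  by apply: cC => // u; exact: iYx2.
have e_Py : Py = m R C Z dX dZ dY TX TZ TY PX PZ PY fX fZ fY c x (pYa Z x y).
  by apply: cC => // u; exact: iY.
have eYX : forall yy b, cP (evI (Y_ yy) (X_ b)) (evC c) = m R C Z dX dZ dY TX TZ TY PX PZ PY fX fZ fY c x (pand Z (pYa Z x yy) (pXa Z b)).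
  by move=> yy b; apply: cC => //; apply: iI => u; [exact: iY|exact: iX].
have eB : forall (yy : bool) z, cP (Y_ yy) (evI (Z_ z) (evC c))
    = m R C Z dX dZ dY TX TZ TY PX PZ PY fX fZ fY c x (pand Z (pYa Z x yy) (pZa Z x z)) / m R C Z dX dZ dY TX TZ TY PX PZ PY fX fZ fY c x (pZa Z x z).
  move=> yy z; apply: cG => //; [move=> u; exact: iY|exact: vIC|].
  by apply: iIC => u; exact: iZ.
have eA : forall (b : bool) z, cP (Z_ z) (evI (X_ b) (evC c))
    = m R C Z dX dZ dY TX TZ TY PX PZ PY fX fZ fY c x (pand Z (pZa Z x z) (pXa Z b)) / m R C Z dX dZ dY TX TZ TY PX PZ PY fX fZ fY c x (pXa Z b).
  move=> b z; apply: cG => //; [move=> u; exact: iZ|exact: vIC|].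
  by apply: iIC => u; exact: iX.
have m0 := @m_ge0 R C Z dX dZ dY TX TZ TY PX PZ PY fX fZ fY c x.
have E1' := @E1 R C Z dX dZ dY TX TZ TY PX PZ PY fX fZ fY c x y.
have E2' := @E2 R C Z dX dZ dY TX TZ TY PX PZ PY fX fZ fY c x y.
have E3' := @E3 R C Z dX dZ dY TX TZ TY PX PZ PY fX fZ fY c x y.
have hf : f = W + sigma * m R C Z dX dZ dY TX TZ TY PX PZ PY fX fZ fY c x (P1 Z y).
  rewrite /f /W /sigma e_p1 e_p2 e_p3 e_p4 e_Pyx e_Pyx' e_Py'x' E1' E2' E3'.
  lra.
have hL : L <= m R C Z dX dZ dY TX TZ TY PX PZ PY fX fZ fY c x (P1 Z y).
  rewrite /L e_Pyx e_Pyx' e_Py.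
  have := @L2 R C Z dX dZ dY TX TZ TY PX PZ PY fX fZ fY c x y; have := @L3 R C Z dX dZ dY TX TZ TY PX PZ PY fX fZ fY c x y; have := @L4 R C Z dX dZ dY TX TZ TY PX PZ PY fX fZ fY c x y.
  have := m0 (P1 Z y).
  rewrite !ge_max => *; repeat (apply/andP; split); lra.
have hU : m R C Z dX dZ dY TX TZ TY PX PZ PY fX fZ fY c x (P1 Z y) <= U.
  rewrite /U e_Pyx e_Py'x' !eYX e_Pyx'.
  under eq_bigr => z _ do under eq_bigr => z' _ do rewrite !eB !eA.
  have := @U1 R C Z dX dZ dY TX TZ TY PX PZ PY fX fZ fY c x y; have := @U2 R C Z dX dZ dY TX TZ TY PX PZ PY fX fZ fY c x y; have := @U3 R C Z dX dZ dY TX TZ TY PX PZ PY fX fZ fY c x y.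
  have := @U4 R C Z dX dZ dY TX TZ TY PX PZ PY fX fZ fY c x y.
  have := @bnd5 R C Z dX dZ dY TX TZ TY PX PZ PY fX fZ fY hmeas c x y qx qx'.
  rewrite !le_min => *; repeat (apply/andP; split); first [lra | done].
rewrite hf; split => hs; apply/andP; split; nra.
Qed.
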